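(* Let $d\ge 2$, let $\bm{k}_1,\ldots,\bm{k}_d\in\mathbb{R}^d$ be a basis of $\mathbb{R}^d$ with $\mathsf{K}=[\bm{k}_1,\ldots,\bm{k}_d]$, and let $\mathfrak{a},\mathfrak{b}\in\mathbb{R}$. For $\bm{u}=[\alpha_1,\ldots,\alpha_d,\beta_1,\ldots,\beta_d]^T\in\mathbb{C}^{2d}$ and $\bm{x}\in\mathbb{R}^d$ let $p(\bm{x};\bm{u})=\sum_{j=1}^d\alpha_j e^{i\bm{k}_j\cdot\bm{x}}+\beta_j e^{-i\bm{k}_j\cdot\bm{x}}$, $\psi(\bm{x};\bm{u})=\mathfrak{a}|p(\bm{x};\bm{u})|^2-\mathfrak{b}|\nabla_{\bm{x}}p(\bm{x};\bm{u})|^2$, and let $\mathsf{Q}(\bm{0})$ be the Hermitian matrix with $\psi(\bm{0};\bm{u})=\bm{u}^*\mathsf{Q}(\bm{0})\bm{u}$. Fix a sign $\pm$ (with $\mp$ denoting the opposite sign), and let $\bm{u}=[\bm{v};\pm\bm{v}]$, $\bm{v}\in\mathbb{R}^d$, be a real unit-norm eigenvector of $\mathsf{Q}(\bm{0})$ with eigenvalue $\lambda$. Let $$T^\pm_{\lambda,\bm{u}}=\{\bm{s}\in\{0,1\}^d:\ [(-1)^{\bm{s}}\odot\bm{v};\mp(-1)^{\bm{s}}\odot\bm{v}]\ \text{is in the }\lambda\text{-eigenspace of }\mathsf{Q}(\bm{0})\}.$$ Then for every $\bm{n}\in\mathbb{Z}^d$ and every $\bm{s}\in T^\pm_{\lambda,\bm{u}}$,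 the set $L_{\lambda,\bm{u}}=\{\bm{x}\in\mathbb{R}^d:\psi(\bm{x};\bm{u})=\lambda\}$ contains the line $$\{\mathsf{K}^{-T}(\theta(-1)^{\bm{s}}+2\pi\bm{n}):\theta\in\mathbb{R}\}.$$
   Context: $[\bm{x};\bm{y}]$ denotes the vertical stacking of vectors $\bm{x},\bm{y}$. For $\bm{s}\in\{0,1\}^d$, $(-1)^{\bm{s}}=[(-1)^{s_1},\ldots,(-1)^{s_d}]$, and $\odot$ is the componentwise (Hadamard) product. *)

(* Defs.v *)
From HB Require Import structures.
From mathcomp Require Import all_boot all_order all_algebra.
From mathcomp Require Import all_classical all_reals all_analysis.
From mathcomp Require Import complex.
Set Implicit Arguments. Unset Strict Implicit. Unset Printing Implicit Defensive.
Import Order.TTheory GRing.Theory Num.Theory.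
Import numFieldNormedType.Exports.
Local Open Scope ring_scope.
Local Open Scope complex_scope.

Section Defs.
Variable R : realType.
Variable d : nat.

Definition expi (t : R) : R[i] := cos t +i* sin t.

Definition kdot (K : 'M[R]_d) (j : 'I_d) (x : 'cV[R]_d) : R :=
  \sum_(m < d) K m j * x m 0.

Definition alpha (u : 'cV[R[i]]_(d + d)) (j : 'I_d) : R[i] := u (lshift d j) 0.
Definition beta (u : 'cV[R[i]]_(d + d)) (j : 'I_d) : R[i] := u (rshift d j) 0.

Definition pfun (K : 'M[R]_d) (u : 'cV[R[i]]_(d + d)) (x : 'cV[R]_d) : R[i] :=
  \sum_(j < d) (alpha u j * expi (kdot K j x) + beta u j * expi (- kdot K j x)).

Definition csqnorm (z : R[i]) : R := complex.Re z ^+ 2 + complex.Im z ^+ 2.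

Definition gradsqnorm (K : 'M[R]_d) (u : 'cV[R[i]]_(d + d)) (x : 'cV[R]_d) : R :=
  \sum_(m < d)
    ( ('D_(delta_mx m 0) (fun y : 'cV[R]_d => complex.Re (pfun K u y)) x) ^+ 2
    + ('D_(delta_mx m 0) (fun y : 'cV[R]_d => complex.Im (pfun K u y)) x) ^+ 2).

Definition psi (a b : R) (K : 'M[R]_d) (u : 'cV[R[i]]_(d + d)) (x : 'cV[R]_d) : R :=
  a * csqnorm (pfun K u x) - b * gradsqnorm K u x.

Definition adjmx m n (A : 'M[R[i]]_(m, n)) : 'M[R[i]]_(n, m) := (map_mx conjc A)^T.

Definition cvec n (w : 'cV[R]_n) : 'cV[R[i]]_n := map_mx (fun r => r%:C) w.

Definition sgnb (b : bool) : R := (-1) ^+ b.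

Definition signflip (s : 'I_d -> bool) (v : 'cV[R]_d) : 'cV[R]_d :=
  \col_i (sgnb (s i) * v i 0).

(* membership of s in T^{+-}_{lambda,u}, sign + encoded by pm = false:
   [(-1)^s (.) v ; -+ (-1)^s (.) v] lies in the lambda-eigenspace of Q *)
Definition inT (Q : 'M[R[i]]_(d + d)) (lam : R[i]) (pm : bool) (v : 'cV[R]_d)
    (s : 'I_d -> bool) : Prop :=
  let w := cvec (col_mx (signflip s v) (sgnb (~~ pm) *: signflip s v)) in
  Q *m w = lam *: w.

End Defs.

(* Main.v *)
Require Import Defs.
From HB Require Import structures.
From mathcomp Require Import all_boot all_order all_algebra.
From mathcomp Require Import all_classical all_reals all_analysis.
From mathcomp Require Import complex.
From mathcomp Require Import lra ring.
Import Order.TTheory GRing.Theory Num.Theory.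
Import numFieldNormedType.Exports.
Set Implicit Arguments. Unset Strict Implicit. Unset Printing Implicit Defensive.
Local Open Scope ring_scope.
Local Open Scope complex_scope.

Section S.
Variable R : realType.
Variable d : nat.

Lemma Re_sum n (F : 'I_n -> R[i]) : complex.Re (\sum_(j < n) F j) = \sum_(j < n) complex.Re (F j).
Proof. by apply: (big_morph (@complex.Re R)) => // [[a b] [c e]]. Qed.
Lemma Im_sum n (F : 'I_n -> R[i]) : complex.Im (\sum_(j < n) F j) = \sum_(j < n) complex.Im (F j).
Proof. by apply: (big_morph (@complex.Im R)) => // [[a b] [c e]]. Qed.

Definition uvec (z : 'cV[R]_d) (t : R) : 'cV[R[i]]_(d + d) := cvec (col_mx z (t *: z)).

Lemma alpha_u z t j : alpha (uvec z t) j = (z j 0)%:C.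
Proof. by rewrite /alpha /uvec /cvec mxE col_mxEu. Qed.
Lemma beta_u z t j : beta (uvec z t) j = (t * z j 0)%:C.
Proof. by rewrite /beta /uvec /cvec mxE col_mxEd mxE. Qed.

Lemma Re_pfun K z t y : complex.Re (pfun K (uvec z t) y) =
  \sum_(j < d) ((1 + t) * z j 0) * cos (kdot K j y).
Proof.
rewrite /pfun Re_sum; apply: eq_bigr => j _.
rewrite alpha_u beta_u /expi /= cosN sinN; ring.
Qed.
Lemma Im_pfun K z t y : complex.Im (pfun K (uvec z t) y) =
  \sum_(j < d) ((1 - t) * z j 0) * sin (kdot K j y).
Proof.
rewrite /pfun Im_sum; apply: eq_bigr => j _.
rewrite alpha_u beta_u /expi /= cosN sinN; ring.
Qed.
Lemma derive_line (V : normedModType R) (f : V -> R) (x e : V) :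
  'D_e f x = 'D_1 (fun h : R => f (h *: e + x)) 0.
Proof.
rewrite /derive; do 2 f_equal; apply/funext => h /=.
by rewrite /shift /= scale0r add0r addr0 -[h%:A]/(h * 1) mulr1.
Qed.

Lemma is_derive_affine (c k x : R) : is_derive x 1 (fun h => c + h * k) k.
Proof.
have -> : (fun h => c + h * k) = cst c + k \*: id.
  by apply/funext => h /=; rewrite mulrC.
have H := (is_deriveD (is_derive_cst (c:R^o) (x:R^o) 1) (is_deriveZ k (is_derive_id (x:R^o) 1))).
by rewrite add0r -[k%:A]/(k * 1) mulr1 in H.
Qed.

Lemma is_derive_cosaff (P c k x : R) :
  is_derive x 1 (fun h => P * cos (c + h * k)) (P * (- sin (c + x * k) * k)).
Proof.
have -> : (fun h => P * cos (c + h * k)) = P \*: (cos \o (fun h => c + h * k)).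
  by apply/funext.
apply: is_deriveZ; exact: (is_derive1_comp (is_derive_cos _) (is_derive_affine c k x)).
Qed.

Lemma is_derive_sinaff (P c k x : R) :
  is_derive x 1 (fun h => P * sin (c + h * k)) (P * (cos (c + x * k) * k)).
Proof.
have -> : (fun h => P * sin (c + h * k)) = P \*: (sin \o (fun h => c + h * k)).
  by apply/funext.
apply: is_deriveZ; exact: (is_derive1_comp (is_derive_sin _) (is_derive_affine c k x)).
Qed.

Lemma derive_sumcos n (P c k : 'I_n -> R) :
  'D_1 (fun h : R => \sum_(j < n) P j * cos (c j + h * k j)) 0
  = \sum_(j < n) P j * (- sin (c j) * k j).
Proof.
have -> : (fun h : R => \sum_(j < n) P j * cos (c j + h * k j)) =
   \sum_(j < n) (fun h => P j * cos (c j + h * k j)).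
  by apply/funext => h; rewrite fct_sumE.
have H := @is_derive_sum R R^o R^o n (fun j h => P j * cos (c j + h * k j)) 0 1
  (fun j => P j * (- sin (c j + 0 * k j) * k j)) (fun j => is_derive_cosaff _ _ _ _).
rewrite derive_val; apply: eq_bigr => j _; by rewrite mul0r addr0.
Qed.

Lemma derive_sumsin n (P c k : 'I_n -> R) :
  'D_1 (fun h : R => \sum_(j < n) P j * sin (c j + h * k j)) 0
  = \sum_(j < n) P j * (cos (c j) * k j).
Proof.
have -> : (fun h : R => \sum_(j < n) P j * sin (c j + h * k j)) =
   \sum_(j < n) (fun h => P j * sin (c j + h * k j)).
  by apply/funext => h; rewrite fct_sumE.
have H := @is_derive_sum R R^o R^o n (fun j h => P j * sin (c j + h * k j)) 0 1
  (fun j => P j * (cos (c j + 0 * k j) * k j)) (fun j => is_derive_sinaff _ _ _ _).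
rewrite derive_val; apply: eq_bigr => j _; by rewrite mul0r addr0.
Qed.

Lemma kdot_line K j m (x : 'cV[R]_d) h :
  kdot K j (h *: delta_mx m 0 + x) = kdot K j x + h * K m j.
Proof.
rewrite /kdot (bigD1 m) //= (bigD1 m (P := predT)) //=.
rewrite !mxE eqxx /= mulr1.
have -> : \sum_(i < d | i != m) K i j * (h *: delta_mx m 0 + x) i 0 =
          \sum_(i < d | i != m) K i j * x i 0.
  apply: eq_bigr => i /negbTE him; rewrite !mxE him /= mulr0 add0r //.
ring.
Qed.

Lemma dRe K z t x m :
  'D_(delta_mx m 0) (fun y : 'cV[R]_d => complex.Re (pfun K (uvec z t) y)) x
  = \sum_(j < d) ((1 + t) * z j 0) * (- sin (kdot K j x) * K m j).
Proof.
rewrite derive_line.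
have -> : (fun h : R => complex.Re (pfun K (uvec z t) (h *: delta_mx m 0 + x))) =
  (fun h : R => \sum_(j < d) ((1 + t) * z j 0) * cos (kdot K j x + h * K m j)).
  apply/funext => h; rewrite Re_pfun; apply: eq_bigr => j _; by rewrite kdot_line.
by rewrite derive_sumcos.
Qed.

Lemma dIm K z t x m :
  'D_(delta_mx m 0) (fun y : 'cV[R]_d => complex.Im (pfun K (uvec z t) y)) x
  = \sum_(j < d) ((1 - t) * z j 0) * (cos (kdot K j x) * K m j).
Proof.
rewrite derive_line.
have -> : (fun h : R => complex.Im (pfun K (uvec z t) (h *: delta_mx m 0 + x))) =
  (fun h : R => \sum_(j < d) ((1 - t) * z j 0) * sin (kdot K j x + h * K m j)).
  apply/funext => h; rewrite Im_pfun; apply: eq_bigr => j _; by rewrite kdot_line.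
by rewrite derive_sumsin.
Qed.

Lemma psi_form a b K z t x (th : R) (tt : 'I_d -> R)
  (hc : forall j, cos (kdot K j x) = cos th)
  (hs : forall j, sin (kdot K j x) = tt j * sin th) :
  psi a b K (uvec z t) x =
    cos th ^+ 2 * (a * ((1 + t) ^+ 2 * (\sum_(j < d) z j 0) ^+ 2)
                   - b * ((1 - t) ^+ 2 * \sum_(m < d) (\sum_(j < d) K m j * z j 0) ^+ 2))
  + sin th ^+ 2 * (a * ((1 - t) ^+ 2 * (\sum_(j < d) tt j * z j 0) ^+ 2)
                   - b * ((1 + t) ^+ 2 * \sum_(m < d) (\sum_(j < d) K m j * (tt j * z j 0)) ^+ 2)).
Proof.
have E3 : forall m, \sum_(j < d) (1 + t) * z j 0 * (- sin (kdot K j x) * K m j)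
   = - ((1 + t) * sin th) * \sum_(j < d) K m j * (tt j * z j 0).
  move=> m; rewrite mulr_sumr; apply: eq_bigr => j _; rewrite hs; ring.
have E4 : forall m, \sum_(j < d) (1 - t) * z j 0 * (cos (kdot K j x) * K m j)
   = ((1 - t) * cos th) * \sum_(j < d) K m j * z j 0.
  move=> m; rewrite mulr_sumr; apply: eq_bigr => j _; rewrite hc; ring.
rewrite /psi.
have -> : gradsqnorm K (uvec z t) x =
   ((1 + t) * sin th) ^+ 2 * \sum_(m < d) (\sum_(j < d) K m j * (tt j * z j 0)) ^+ 2 +
   ((1 - t) * cos th) ^+ 2 * \sum_(m < d) (\sum_(j < d) K m j * z j 0) ^+ 2.
  rewrite /gradsqnorm !mulr_sumr -big_split /=.
  apply: eq_bigr => m _; rewrite dRe dIm E3 E4; ring.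
have E1 : \sum_(j < d) (1 + t) * z j 0 * cos (kdot K j x) = (1 + t) * cos th * \sum_(j < d) z j 0.
  rewrite mulr_sumr; apply: eq_bigr => j _; rewrite hc; ring.
have E2 : \sum_(j < d) (1 - t) * z j 0 * sin (kdot K j x) = (1 - t) * sin th * \sum_(j < d) tt j * z j 0.
  rewrite mulr_sumr; apply: eq_bigr => j _; rewrite hs; ring.
rewrite /csqnorm Re_pfun Im_pfun E1 E2.
ring.
Qed.

Lemma kdotE K j (y : 'cV[R]_d) : kdot K j y = (K^T *m y) j 0.
Proof. by rewrite /kdot mxE; apply: eq_bigr => m _; rewrite mxE. Qed.

Lemma kdot0 K j : kdot K j (0 : 'cV[R]_d) = 0.
Proof. by rewrite /kdot big1 // => m _; rewrite mxE mulr0. Qed.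

Lemma sumsq_col (z : 'cV[R]_d) t :
  \sum_(i < d + d) (col_mx z (t *: z) i 0) ^+ 2 = (1 + t ^+ 2) * \sum_(j < d) z j 0 ^+ 2.
Proof.
rewrite big_split_ord /=.
under eq_bigr do rewrite col_mxEu.
under [X in _ + X]eq_bigr do rewrite col_mxEd mxE.
rewrite mulrDl mul1r mulr_sumr; congr (_ + _); apply: eq_bigr => j _; ring.
Qed.

Lemma quadC (Q : 'M[R[i]]_(d + d)) lam (y : 'cV[R]_(d + d)) :
  Q *m cvec y = lam *: cvec y ->
  (adjmx (cvec y) *m Q *m cvec y) 0 0 = lam * (\sum_(i < d + d) y i 0 ^+ 2)%:C.
Proof.
move=> H; rewrite -mulmxA H -scalemxAr mxE; congr (_ * _).
rewrite mxE rmorph_sum; apply: eq_bigr => i _.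
rewrite /adjmx /cvec !mxE /= expr2 rmorphM.
by rewrite oppr0.
Qed.

Lemma periodic_int (f : R -> R) (hf : forall y, f (y + pi *+ 2) = f y) (n : int) y :
  f (y + 2 * pi * n%:~R) = f y.
Proof.
have Hn : forall m : nat, forall y, f (y + 2 * pi * m%:R) = f y.
  elim=> [|m IH] y'; first by rewrite mulr0 addr0.
  rewrite -[m.+1]addn1 natrD mulrDr mulr1 addrA.
  have E : 2 * pi = pi *+ 2 :> R by rewrite -[2]/(2%:R) mulr_natl.
  by rewrite [in X in f X]E hf -E IH.
case: n => k.
  by rewrite -[(Posz k)%:~R]/(k%:R) Hn.
rewrite NegzE mulrNz -[(Posz k.+1)%:~R]/(k.+1%:R) mulrN.
by rewrite -(Hn k.+1 (y - 2 * pi * k.+1%:R)) subrK.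
Qed.

Lemma sgnb_sq b : sgnb R b ^+ 2 = 1.
Proof. by rewrite /sgnb -exprM mulnC exprM sqrrN expr1n expr1n. Qed.

Lemma sgnbN b : sgnb R (~~ b) = - sgnb R b.
Proof. by case: b; rewrite /sgnb /= ?expr0 ?expr1 ?opprK. Qed.

Lemma cos_sgnb th b : cos (th * sgnb R b) = cos th.
Proof. by case: b; rewrite /sgnb ?expr1 ?expr0 ?mulr1 ?mulrN1 ?cosN. Qed.

Lemma sin_sgnb th b : sin (th * sgnb R b) = sgnb R b * sin th.
Proof. by case: b; rewrite /sgnb ?expr1 ?expr0 ?mulr1 ?mul1r ?mulrN1 ?mulN1r ?sinN. Qed.

Lemma comb (c s A B L : R) : c + s = 1 -> A = L -> B = L -> c * A + s * B = L.
Proof. by move=> h -> ->; rewrite -mulrDl h mul1r. Qed.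
End S.

Theorem lemma2p7 (R : realType) (d : nat) (hd : (2 <= d)%N)
    (K : 'M[R]_d) (hK : K \in unitmx) (a b : R)
    (Q : 'M[R[i]]_(d + d))
    (hQherm : adjmx Q = Q)
    (hQ : forall u : 'cV[R[i]]_(d + d),
        (psi a b K u 0)%:C = (adjmx u *m Q *m u) 0 0)
    (pm : bool) (v : 'cV[R]_d) (lam : R[i])
    (hunit : \sum_(i < d + d) (col_mx v (sgnb R pm *: v) i 0) ^+ 2 = 1)
    (heig : Q *m cvec (col_mx v (sgnb R pm *: v))
            = lam *: cvec (col_mx v (sgnb R pm *: v)))
    (n : 'I_d -> int) (s : 'I_d -> bool) (hs : inT Q lam pm v s)
    (theta : R) :
  (psi a b K (cvec (col_mx v (sgnb R pm *: v)))
     (invmx K^T *m \col_j (theta * sgnb R (s j) + 2 * pi * (n j)%:~R)))%:C = lam.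
Proof.
set sg := sgnb R pm.
set x0 := invmx K^T *m _.
have hk : forall j, kdot K j x0 = theta * sgnb R (s j) + 2 * pi * (n j)%:~R.
  by move=> j; rewrite kdotE /x0 mulmxA mulmxV ?unitmx_tr // mul1mx mxE.
have hc : forall j, cos (kdot K j x0) = cos theta.
  by move=> j; rewrite hk (periodic_int (@cosD2pi R)) cos_sgnb.
have hsn : forall j, sin (kdot K j x0) = sgnb R (s j) * sin theta.
  by move=> j; rewrite hk (periodic_int (@sinD2pi R)) sin_sgnb.
have hc0 : forall j, cos (kdot K j (0 : 'cV[R]_d)) = cos 0.
  by move=> j; rewrite kdot0.
have hs0 : forall j, sin (kdot K j (0 : 'cV[R]_d)) = 1 * sin 0.
  by move=> j; rewrite kdot0 mul1r.
have P1 := @psi_form R d a b K v sg x0 theta (fun j => sgnb R (s j)) hc hsn.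
have P0 := @psi_form R d a b K v sg 0 0 (fun _ => 1) hc0 hs0.
have PW := @psi_form R d a b K (signflip s v) (sgnb R (~~ pm)) 0 0 (fun _ => 1) hc0 hs0.
have hu : (psi a b K (uvec v sg) 0)%:C = lam.
  by rewrite (hQ (uvec v sg)) /uvec (quadC heig) hunit mulr1.
have hs' : Q *m cvec (col_mx (signflip s v) (sgnb R (~~ pm) *: signflip s v))
   = lam *: cvec (col_mx (signflip s v) (sgnb R (~~ pm) *: signflip s v)) := hs.
have hw : (psi a b K (uvec (signflip s v) (sgnb R (~~ pm))) 0)%:C = lam.
  rewrite (hQ _) /uvec (quadC hs') sumsq_col sgnb_sq.
  rewrite /sg sumsq_col sgnb_sq in hunit.
  suff -> : (1 + 1) * \sum_(j < d) signflip s v j 0 ^+ 2 = 1 by rewrite mulr1.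
  rewrite -[RHS]hunit; congr (_ * _).
  by apply: eq_bigr => j _; rewrite mxE exprMn sgnb_sq mul1r.
have E : psi a b K (uvec (signflip s v) (sgnb R (~~ pm))) 0 = psi a b K (uvec v sg) 0.
  by have := congr1 (@complex.Re R) (etrans hw (esym hu)).
change ((psi a b K (uvec v sg) x0)%:C = lam).
rewrite P1 -hu; congr (_%:C).
apply: comb; first exact: cos2Dsin2.
  by rewrite P0 cos0 sin0; ring.
rewrite -E PW cos0 sin0 sgnbN.
have F1 : \sum_(j < d) signflip s v j 0 = \sum_(j < d) sgnb R (s j) * v j 0.
  by apply: eq_bigr => j _; rewrite mxE.
have F2 : \sum_(m < d) (\sum_(j < d) K m j * signflip s v j 0) ^+ 2
        = \sum_(m < d) (\sum_(j < d) K m j * (sgnb R (s j) * v j 0)) ^+ 2.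
  by apply: eq_bigr => m _; congr (_ ^+ 2); apply: eq_bigr => j _; rewrite mxE.
rewrite F1 F2 /sg; ring.
Qed.
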